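(* Let $K$ be a field, $P=K[x_1,\dots,x_n]$, $g_1,\dots,g_r\in P$, $I=\langle g_1,\dots,g_r\rangle$, and let $Z=(z_1,\dots,z_s)$ be a tuple of distinct indeterminates among $x_1,\dots,x_n$. The procedure $\mathrm{CHECK}$ applied to $(g_1,\dots,g_r)$ and $Z$ terminates after finitely many steps and returns either ``Fail'' or a tuple $W=(w_1,\dots,w_n)\in\mathbb{N}^n$. If it returns a tuple $W$, then there exist $f_1,\dots,f_s\in\langle g_1,\dots,g_r\rangle_K$ such that for every term ordering $\sigma$ on $P$ compatible with the grading given by $W$ we have $\operatorname{LT}_\sigma(f_i)=z_i$ for $i=1,\dots,s$; in particular $(f_1,\dots,f_s)$ is a $Z$-separating tuple of polynomials in $I$.
   Context: $\operatorname{Supp}(f)$ is the set of terms occurring in $f$; $\operatorname{Lin}(f)$ is the homogeneous degree-1 component of $f$; $\langle\cdot\rangle_K$ denotes $K$-linear span. A tuple $(f_1,\dots,f_s)$ of polynomials in an ideal $I$ is $Z$-separating if there is a term ordering $\sigma$ with $\operatorname{LT}_\sigma(f_i)=z_i$ for all $i$. For $W=(w_1,\dots,w_n)$, the $W$-degree of a term $x_1^{a_1}\cdots x_n^{a_n}$ is $\sum w_ia_i$; a term ordering $\sigma$ is compatible with the grading given by $W$ if $t>_\sigma t'$ whenever the $W$-degree of $t$ exceeds that of $t'$. Procedure $\mathrm{LI}$ (linear interreduction), applied to a tuple $Z=(z_1,\dots,z_s)$ of distinct indeterminates and polynomials $g_1,\dots,g_r$: let $t_1>\dots>t_m$ (lexicographic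 order, $x_1>\dots>x_n$) be the terms of $\bigcup_j\operatorname{Supp}(g_j)$ other than $z_1,\dots,z_s$; form the coefficient matrix $M$ of $g_1,\dots,g_r$ w.r.t. column order $(z_1,\dots,z_s,t_1,\dots,t_m)$; output the polynomials whose coefficient vectors are the nonzero rows of the reduced row echelon form of $M$, in order. Procedure $\mathrm{CHECK}$ on input $(g_1,\dots,g_r)$ and $Z$: (1) set $w_1=\dots=w_n=0$, $\delta=\max_j\deg(g_j)$, $d=1$. (2) In each $g_j$ delete every monomial not divisible by some indeterminate of $Z$. (3) If $\dim_K\langle\operatorname{Lin}(g_1),\dots,\operatorname{Lin}(g_r)\rangle_K<\#Z$, return ``Fail''. (4) Repeat: (i) replace the current list $g_1,\dots,g_r$ by the output of $\mathrm{LI}$ applied to the current $Z$ and the current list; (ii) let $\widetilde Z$ be the set of indeterminates of the current $Z$ that occur as elements of the current list; (iii) if $\widetilde Z=\emptyset$, return ``Fail''; (iv) for each $z\in\widetilde Z$, say $z=x_k$, set $w_k=d$ and remove $z$ from $Z$; (v) in each current $g_j$ delete every monomial not divisible by some indeterminate of the (updated) $Z$; (vi) replace $d$ by $\delta d+1$; until $Z$ is empty. (5) Return $W=(w_1,\dots,w_n)$. *)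

(* Defs.v *)
From HB Require Import structures.
From mathcomp Require Import all_boot all_order all_algebra.
From mathcomp Require Import mpoly.
Set Implicit Arguments.
Unset Strict Implicit.
Unset Printing Implicit Defensive.
Import Order.TTheory GRing.Theory.
Local Open Scope ring_scope.

Section Defs.
Variables (K : fieldType) (n : nat).
Local Notation poly := {mpoly K[n]}.
Local Notation term := 'X_{1..n}.

(* total degree of a polynomial (0 for the zero polynomial) *)
Definition tdeg (g : poly) : nat := (\max_(m <- msupp g) mdeg m)%N.

Definition inKSpan (gs : seq poly) (p : poly) : Prop :=
  exists c : 'I_(size gs) -> K, p = \sum_(i < size gs) c i *: gs`_i.

Definition inIdeal (gs : seq poly) (p : poly) : Prop :=
  exists c : 'I_(size gs) -> poly, p = \sum_(i < size gs) c i * gs`_i.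

(* term orderings on the monoid of terms (multiplication of terms = addition
   of exponent vectors, 1 = the zero exponent vector) *)
Definition termOrdering (le : rel term) : Prop :=
  [/\ reflexive le, antisymmetric le, transitive le & total le] /\
  (forall t t1 t2, le t1 t2 -> le (t + t1)%MM (t + t2)%MM) /\
  (forall t, le 0%MM t).

Definition LTis (le : rel term) (f : poly) (t : term) : Prop :=
  t \in msupp f /\ forall m, m \in msupp f -> le m t.

Definition wdeg (W : 'I_n -> nat) (t : term) : nat := (\sum_(i < n) W i * t i)%N.

Definition compatible (W : 'I_n -> nat) (le : rel term) : Prop :=
  forall t t', (wdeg W t' < wdeg W t)%N -> le t' t && (t' != t).

Definition ZSeparating s (gs : seq poly) (Z : s.-tuple 'I_n) (f : 'I_s -> poly)
  : Prop :=
  (forall i, inIdeal gs (f i)) /\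
  exists le : rel term, termOrdering le /\
    forall i, LTis le (f i) U_(tnth Z i)%MM.

(* lexicographic order on terms, x_1 > ... > x_n (x_1 is index 0) *)
Definition lexLt (m1 m2 : term) : bool :=
  [exists k : 'I_n, [forall i : 'I_n, (i < k)%N ==> (m1 i == m2 i)]
                    && (m1 k < m2 k)%N].

(* position of the term m among z_1,..,z_s (size Z if m is not one of them) *)
Definition zIndex (Z : seq 'I_n) (m : term) : nat :=
  find (fun z => m == U_(z)%MM) Z.

(* column order (z_1,..,z_s,t_1,..,t_m): colLt Z m1 m2 means that the column
   of m1 comes strictly before the column of m2 *)
Definition colLt (Z : seq 'I_n) (m1 m2 : term) : bool :=
  if (zIndex Z m1 < size Z)%N then (zIndex Z m1 < zIndex Z m2)%N
  else (zIndex Z m2 == size Z) && lexLt m2 m1.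

(* m is the pivot (leading column) of the coefficient row of h *)
Definition isPivot (Z : seq 'I_n) (h : poly) (m : term) : Prop :=
  m \in msupp h /\ forall m', m' \in msupp h -> m' != m -> colLt Z m m'.

(* hs = LI(Z; gs): hs are the polynomials whose coefficient vectors are the
   nonzero rows of the reduced row echelon form of the coefficient matrix of
   gs w.r.t. the column order above, listed in order. *)
Definition isLI (Z : seq 'I_n) (gs hs : seq poly) : Prop :=
  [/\ all (fun h => h != 0) hs,
      (forall h, h \in hs -> inKSpan gs h),
      (forall g, g \in gs -> inKSpan hs g) &
      exists piv : 'I_(size hs) -> term,
        [/\ forall i : 'I_(size hs), isPivot Z hs`_i (piv i),
            forall i j : 'I_(size hs), (i < j)%N -> colLt Z (piv i) (piv j),
            forall i : 'I_(size hs), hs`_i@_(piv i) = 1 &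
            forall i j : 'I_(size hs), i != j -> hs`_j@_(piv i) = 0]].

Definition restrictZ (Z : seq 'I_n) (p : poly) : poly :=
  \sum_(m <- msupp p | has (fun z => (0 < m z)%N) Z) p@_m *: 'X_[m].

Definition linMx (gs : seq poly) : 'M[K]_(size gs, n) :=
  \matrix_(j < size gs, i < n) gs`_j@_(U_(i)%MM).

Definition Ztilde (Z : seq 'I_n) (hs : seq poly) : seq 'I_n :=
  [seq z <- Z | 'X_z \in hs].

(* the repeat-loop of step (4); state: list gs, Z, weights w, d.
   [checkLoop delta gs Z w d res] means the loop started in this state
   terminates with result res (None = "Fail", Some W = W). *)
Inductive checkLoop (delta : nat) :
  seq poly -> seq 'I_n -> ('I_n -> nat) -> nat -> option ('I_n -> nat) -> Prop :=
| loop_fail gs Z w d hs :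
    isLI Z gs hs -> Ztilde Z hs = [::] ->
    checkLoop delta gs Z w d None
| loop_stop gs Z w d hs :
    isLI Z gs hs -> Ztilde Z hs != [::] ->
    [seq z <- Z | z \notin Ztilde Z hs] = [::] ->
    checkLoop delta gs Z w d
      (Some (fun k => if k \in Ztilde Z hs then d else w k))
| loop_next gs Z w d hs res :
    isLI Z gs hs -> Ztilde Z hs != [::] ->
    [seq z <- Z | z \notin Ztilde Z hs] != [::] ->
    checkLoop delta
      (map (restrictZ [seq z <- Z | z \notin Ztilde Z hs]) hs)
      [seq z <- Z | z \notin Ztilde Z hs]
      (fun k => if k \in Ztilde Z hs then d else w k)
      (delta * d + 1)%N res ->
    checkLoop delta gs Z w d res.

(* CHECK(gs, Z) returns res (None = "Fail", Some W = the tuple W) *)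
Inductive CHECK (gs : seq poly) (Z : seq 'I_n) : option ('I_n -> nat) -> Prop :=
| check_rank_fail :
    (\rank (linMx (map (restrictZ Z) gs)) < size Z)%N -> CHECK gs Z None
| check_loop res :
    (size Z <= \rank (linMx (map (restrictZ Z) gs)))%N ->
    checkLoop (\max_(g <- gs) tdeg g)%N (map (restrictZ Z) gs) Z
      (fun _ => 0%N) 1%N res ->
    CHECK gs Z res.

End Defs.

(* Main.v *)
Require Import Defs.
From HB Require Import structures.
From mathcomp Require Import all_boot all_order all_algebra.
From mathcomp Require Import mpoly.
Set Implicit Arguments.
Unset Strict Implicit.
Unset Printing Implicit Defensive.
Import Order.TTheory GRing.Theory.
Local Open Scope ring_scope.


Section Span.
Variables (K : fieldType) (n : nat).
Local Notation poly := {mpoly K[n]}.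
Implicit Types (gs hs : seq poly) (p q : poly).

Lemma span0 gs : inKSpan gs 0.
Proof. by exists (fun _ => 0); rewrite big1 // => i _; rewrite scale0r. Qed.

Lemma spanD gs p q : inKSpan gs p -> inKSpan gs q -> inKSpan gs (p + q).
Proof.
move=> [c ->] [d ->]; exists (fun i => c i + d i).
by rewrite -big_split /=; apply: eq_bigr => i _; rewrite scalerDl.
Qed.

Lemma spanZ gs a p : inKSpan gs p -> inKSpan gs (a *: p).
Proof.
move=> [c ->]; exists (fun i => a * c i).
by rewrite scaler_sumr; apply: eq_bigr => i _; rewrite scalerA.
Qed.

Lemma spanN gs p : inKSpan gs p -> inKSpan gs (- p).
Proof. by move=> h; rewrite -scaleN1r; apply: spanZ. Qed.

Lemma spanB gs p q : inKSpan gs p -> inKSpan gs q -> inKSpan gs (p - q).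
Proof. by move=> hp hq; apply: spanD => //; apply: spanN. Qed.

Lemma span_sum gs (I : Type) (r : seq I) (P : pred I) (F : I -> poly) :
  (forall i, P i -> inKSpan gs (F i)) -> inKSpan gs (\sum_(i <- r | P i) F i).
Proof.
move=> h; elim/big_rec: _ => [|i x Pi hx]; first exact: span0.
by apply: spanD => //; apply: h.
Qed.

Lemma span_mem gs p : p \in gs -> inKSpan gs p.
Proof.
move=> pin; exists (fun i => if val i == index p gs then 1 else 0).
have ilt : (index p gs < size gs)%N by rewrite index_mem.
rewrite (bigD1 (Ordinal ilt)) //= eqxx scale1r nth_index // big1 ?addr0 //.
move=> i /eqP ne; case: ifP => [/eqP e|]; last by rewrite scale0r.
by case: ne; apply: val_inj.
Qed.

Lemma span_trans gs hs p :
  (forall h, h \in hs -> inKSpan gs h) -> inKSpan hs p -> inKSpan gs p.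
Proof.
move=> h [c ->]; apply: span_sum => i _; apply: spanZ; apply: h.
exact: mem_nth.
Qed.

End Span.



Section Terms.
Variable (n : nat).
Local Notation term := 'X_{1..n}.
Implicit Types (t m : term).

Lemma lexP m1 m2 : reflect (exists k : 'I_n,
   (forall i : 'I_n, (i < k)%N -> m1 i = m2 i) /\ (m1 k < m2 k)%N) (lexLt m1 m2).
Proof.
apply: (iffP existsP) => [[k /andP [/forallP h lt]]|[k [h lt]]].
  by exists k; split=> // i ik; move: (h i); rewrite ik => /eqP.
exists k; rewrite lt andbT; apply/forallP => i; apply/implyP => ik.
by rewrite h.
Qed.

Lemma lex_irr m : lexLt m m = false.
Proof. by apply/lexP => -[k [_]]; rewrite ltnn. Qed.

Lemma lex_trans m1 m2 m3 : lexLt m1 m2 -> lexLt m2 m3 -> lexLt m1 m3.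
Proof.
move=> /lexP [k1 [h1 l1]] /lexP [k2 [h2 l2]]; apply/lexP.
case: (ltngtP k1 k2) => [lt|lt|/val_inj eq].
- exists k1; split; first by move=> i ik; rewrite h1 // h2 // (ltn_trans ik).
  by rewrite -(h2 k1 lt).
- exists k2; split; first by move=> i ik; rewrite h1 ?h2 // (ltn_trans ik).
  by rewrite (h1 k2 lt).
- subst k2; exists k1; split; first by move=> i ik; rewrite h1 ?h2.
  exact: ltn_trans l2.
Qed.

Lemma lex_total m1 m2 : m1 != m2 -> lexLt m1 m2 || lexLt m2 m1.
Proof.
move=> ne.
have [k0 k0ne] : exists k, m1 k != m2 k.
  apply/existsP; apply: contraR ne => /existsPn h; apply/eqP/mnmP => i.
  by move: (h i); rewrite negbK => /eqP.
case: (@arg_minnP _ k0 (fun k : 'I_n => m1 k != m2 k) (fun k : 'I_n => val k) k0ne) => k kne kmin.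
have hk : forall i : 'I_n, (i < k)%N -> m1 i = m2 i.
  move=> i ik; apply/eqP; apply: contraTT ik => ine.
  by rewrite -leqNgt; apply: kmin.
case: (ltngtP (m1 k) (m2 k)) => [lt|lt|eq]; last by rewrite eq eqxx in kne.
  by apply/orP; left; apply/lexP; exists k.
apply/orP; right; apply/lexP; exists k; split=> // i ik; by rewrite hk.
Qed.

Lemma lexD t m1 m2 : lexLt (t + m1)%MM (t + m2)%MM = lexLt m1 m2.
Proof.
rewrite /lexLt; apply: eq_existsb => k; congr (_ && _).
  by apply: eq_forallb => i; rewrite !mnmDE eqn_add2l.
by rewrite !mnmDE ltn_add2l.
Qed.

Lemma lex_not0 t : lexLt t 0%MM = false.
Proof. by apply/lexP => -[k [_]]; rewrite mnm0E. Qed.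

Variable Z : seq 'I_n.

Lemma zIndex_eq m1 m2 : (zIndex Z m1 < size Z)%N ->
  zIndex Z m1 = zIndex Z m2 -> m1 = m2.
Proof.
rewrite /zIndex -has_find => hs e.
case/hasP: (hs) => x0 _ _.
have h1 := nth_find x0 hs.
have hs2 : has (fun z => m2 == U_(z)%MM) Z by rewrite has_find -e -has_find.
have h2 := nth_find x0 hs2.
by move/eqP: h1 => ->; move/eqP: h2 => ->; rewrite e.
Qed.

Lemma col_irr m : colLt Z m m = false.
Proof. by rewrite /colLt ltnn lex_irr andbF if_same. Qed.

Lemma zIndex_le m : (zIndex Z m <= size Z)%N.
Proof. exact: find_size. Qed.

Lemma col_total m1 m2 : m1 != m2 -> colLt Z m1 m2 || colLt Z m2 m1.
Proof.
move=> ne; rewrite /colLt.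
have l1 := zIndex_le m1; have l2 := zIndex_le m2.
case: (ltnP (zIndex Z m1) (size Z)) => h1; case: (ltnP (zIndex Z m2) (size Z)) => h2.
- case: (ltngtP (zIndex Z m1) (zIndex Z m2)) => // e.
  by rewrite (zIndex_eq h1 e) eqxx in ne.
- by rewrite (leq_trans h1 h2).
- by rewrite (leq_trans h2 h1) orbT.
- have e1 : zIndex Z m1 = size Z by apply/eqP; rewrite eqn_leq l1.
  have e2 : zIndex Z m2 = size Z by apply/eqP; rewrite eqn_leq l2.
  rewrite e1 e2 eqxx /= orbC; exact: lex_total.
Qed.

Lemma col_trans m1 m2 m3 : colLt Z m1 m2 -> colLt Z m2 m3 -> colLt Z m1 m3.
Proof.
rewrite /colLt.
have l1 := zIndex_le m1; have l2 := zIndex_le m2; have l3 := zIndex_le m3.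
case: (ltnP (zIndex Z m1) (size Z)) => h1; case: (ltnP (zIndex Z m2) (size Z)) => h2.
- move=> a b; exact: ltn_trans a b.
- move=> a /andP [/eqP e _]; by rewrite e.
- by move=> /andP [/eqP e _]; rewrite e ltnn in h2.
- move=> /andP [_ a] /andP [/eqP e b]; rewrite e eqxx /=.
  exact: lex_trans b a.
Qed.

End Terms.



Section WOrd.
Variables (n : nat) (W : 'I_n -> nat).
Local Notation term := 'X_{1..n}.

Definition leW (t1 t2 : term) : bool :=
  (wdeg W t1 < wdeg W t2)%N ||
  ((wdeg W t1 == wdeg W t2) && ((t1 == t2) || lexLt t1 t2)).

Lemma wdegD (t t1 : term) : wdeg W (t + t1)%MM = (wdeg W t + wdeg W t1)%N.
Proof.
rewrite /wdeg -big_split /=; apply: eq_bigr => i _.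
by rewrite mnmDE mulnDr.
Qed.

Lemma wdeg0 : wdeg W 0%MM = 0%N.
Proof. by rewrite /wdeg big1 // => i _; rewrite mnm0E muln0. Qed.

Lemma leW_order : termOrdering leW.
Proof.
split; [split|split].
- by move=> t; rewrite /leW !eqxx ltnn.
- move=> a b /andP []; rewrite /leW.
  case: (ltngtP (wdeg W a) (wdeg W b)) => //= _.
  case: eqP => // _; case: eqP => [->//|_] /= ab ba.
  by have := lex_trans ab ba; rewrite lex_irr.
- move=> b a c; rewrite /leW.
  case: (ltngtP (wdeg W a) (wdeg W b)) => //= ab;
  case: (ltngtP (wdeg W b) (wdeg W c)) => //= bc.
  + by rewrite (ltn_trans ab bc).
  + by rewrite -bc ab.
  + by rewrite ab bc.
  + move=> h1 h2; rewrite ab bc eqxx ltnn /=.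
    case/orP: h1 => [/eqP ->|h1]; first by [].
    case/orP: h2 => [/eqP <-|h2]; first by rewrite h1 orbT.
    by rewrite (lex_trans h1 h2) orbT.
- move=> a b; rewrite /leW.
  case: (ltngtP (wdeg W a) (wdeg W b)) => //= e.
  case: (eqVneq a b) => [->|ne] //=.
  by apply: lex_total.
- move=> t t1 t2; rewrite /leW !wdegD ltn_add2l eqn_add2l lexD.
  by rewrite eqm_add2l.
- move=> t; rewrite /leW wdeg0; case: ltnP => //=; rewrite leqn0 eq_sym => ->.
  case: (eqVneq 0%MM t) => [//|ne] /=.
  by case/orP: (lex_total ne) => // ; rewrite lex_not0.
Qed.

Lemma leW_compat : compatible W leW.
Proof.
move=> t t' lt; rewrite /leW lt /=; apply: contraTneq lt => ->.
by rewrite ltnn.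
Qed.

End WOrd.



Section RREF.
Variables (K : fieldType) (n : nat).
Local Notation poly := {mpoly K[n]}.
Local Notation term := 'X_{1..n}.
Variable lt : rel term.
Hypothesis lt_irr : forall m, lt m m = false.
Hypothesis lt_trans : forall a b c, lt a b -> lt b c -> lt a c.
Hypothesis lt_total : forall a b, a != b -> lt a b || lt b a.

Definition isMinG (h : poly) (m : term) : Prop :=
  m \in msupp h /\ (forall m', m' \in msupp h -> m' != m -> lt m m').

Lemma mcoeffS m (I : Type) (r : seq I) (P : pred I) (F : I -> poly) :
  (\sum_(i <- r | P i) F i)@_m = \sum_(i <- r | P i) (F i)@_m.
Proof. exact: raddf_sum. Qed.

Lemma isMin_uniq h m1 m2 : isMinG h m1 -> isMinG h m2 -> m1 = m2.
Proof.
move=> [i1 h1] [i2 h2]; case: (eqVneq m1 m2) => // ne.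
have a : lt m1 m2 by apply: h1; rewrite // eq_sym.
have b := h2 _ i1 ne.
by have := lt_trans a b; rewrite lt_irr.
Qed.

Definition minS (s : seq term) : term :=
  foldr (fun x acc => if lt x acc then x else acc) (head 0%MM s) s.

Lemma foldr_min (a : term) (s : seq term) :
  let r := foldr (fun x acc => if lt x acc then x else acc) a s in
  r \in a :: s /\ forall y, y \in a :: s -> y = r \/ lt r y.
Proof.
elim: s => [|x s [IH1 IH2]] /=.
  by split; [rewrite mem_head | move=> y; rewrite inE => /eqP ->; left].
set r := foldr _ a s in IH1 IH2 *.
case: ifP => lxr.
  split; first by rewrite !inE eqxx orbT.
  move=> y; rewrite !inE => /orP [/eqP ->|/orP [/eqP ->|ys]]; first 2 last.
  - have yin : y \in a :: s by rewrite inE ys orbT.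
    have [->|l] := IH2 y yin; by right => //; apply: lt_trans l.
  - have [->|l] := IH2 a (mem_head _ _); by right => //; apply: lt_trans l.
  - by left.
split; first by move: IH1; rewrite !inE => /orP [->|->]; rewrite ?orbT.
move=> y; rewrite !inE => /orP [/eqP ->|/orP [/eqP ->|ys]].
- by apply: IH2; rewrite mem_head.
- case: (eqVneq x r) => [->|ne]; first by left.
  by case/orP: (lt_total ne) => l; [rewrite l in lxr | right].
- by apply: IH2; rewrite inE ys orbT.
Qed.

Definition piv (h : poly) : term := minS (msupp h).

Lemma pivP h : h != 0 -> isMinG h (piv h).
Proof.
move=> nz; rewrite /piv /minS.
case e: (msupp h) => [|a s]; first by move/eqP: e; rewrite msupp_eq0 (negPf nz).
change (head 0%MM (a :: s)) with a.
have [H1 H2] := foldr_min a (a :: s).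
split.
  by rewrite e; move: H1; rewrite inE => /orP [/eqP ->|//]; rewrite mem_head.
move=> m'; rewrite e => m'in ne; have m'in' : m' \in a :: a :: s by rewrite inE m'in orbT.
have [e'|//] := H2 m' m'in'.
by rewrite e' eqxx in ne.
Qed.

Lemma piv_eq h m : isMinG h m -> piv h = m.
Proof.
move=> hm; have nz : h != 0.
  by case: hm => mi _; apply: contraTneq mi => ->; rewrite msupp0.
exact: isMin_uniq (pivP nz) hm.
Qed.

Lemma isMinE h m : isMinG h m <->
  (h@_m != 0 /\ forall m', h@_m' != 0 -> m' != m -> lt m m').
Proof.
rewrite /isMinG mcoeff_msupp; split=> -[a b]; split=> // m'.
  by rewrite -mcoeff_msupp; apply: b.
by rewrite mcoeff_msupp; apply: b.
Qed.

Definition isLIg (gs hs : seq poly) : Prop :=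
  [/\ all (fun h => h != 0) hs,
      (forall h, h \in hs -> inKSpan gs h),
      (forall g, g \in gs -> inKSpan hs g) &
      exists pv : 'I_(size hs) -> term,
        [/\ forall i : 'I_(size hs), isMinG hs`_i (pv i),
            forall i j : 'I_(size hs), (i < j)%N -> lt (pv i) (pv j),
            forall i : 'I_(size hs), hs`_i@_(pv i) = 1 &
            forall i j : 'I_(size hs), i != j -> hs`_j@_(pv i) = 0]].

Section Expand.
Variables (hs : seq poly) (pv : 'I_(size hs) -> term).
Hypothesis one : forall i : 'I_(size hs), hs`_i@_(pv i) = 1.
Hypothesis zero : forall i j : 'I_(size hs), i != j -> hs`_j@_(pv i) = 0.

Lemma expand v : inKSpan hs v ->
  v = \sum_(i < size hs) v@_(pv i) *: hs`_i.
Proof.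
move=> [c ->]; apply: eq_bigr => j _; congr (_ *: _).
rewrite mcoeffS (bigD1 j) //= mcoeffZ one mulr1 big1 ?addr0 // => i ij.
by rewrite mcoeffZ zero ?mulr0 // eq_sym.
Qed.

Hypothesis mins : forall i : 'I_(size hs), isMinG hs`_i (pv i).
Hypothesis incr : forall i j : 'I_(size hs), (i < j)%N -> lt (pv i) (pv j).

Lemma span_piv v : inKSpan hs v -> v != 0 -> exists j, isMinG v (pv j).
Proof.
move=> vs nz; have ev := expand vs.
have [j0 j0n] : exists j, v@_(pv j) != 0.
  apply/existsP; apply: contraNT nz => /existsPn h; rewrite ev big1 // => i _.
  by move: (h i); rewrite negbK => /eqP ->; rewrite scale0r.
case: (@arg_minnP _ j0 (fun j => v@_(pv j) != 0) (fun j => val j) j0n).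
move=> j jn jmin; exists j; apply/isMinE; split=> // m' m'n m'ne.
have [i [ci hi]] : exists i, v@_(pv i) != 0 /\ hs`_i@_m' != 0.
  apply/'exists_andP; apply: contraNT m'n => /existsPn h.
  rewrite ev mcoeffS big1 // => i _; rewrite mcoeffZ.
  by move: (h i); rewrite negb_and !negbK => /orP [] /eqP ->; rewrite ?mul0r ?mulr0.
have ji := jmin i ci.
have [_ mi] := mins i; move/isMinE: (mins i) => [_ mi'].
case: (eqVneq m' (pv i)) => [e|ne].
  rewrite e; case: (ltngtP j i) => [l|l|/val_inj e'].
  - exact: incr.
  - by rewrite ltnNge ji in l.
  - by subst i; rewrite e eqxx in m'ne.
have l := mi' _ hi ne.
case: (ltngtP j i) => [l'|l'|/val_inj e'].
- exact: lt_trans (incr l') l.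
- by rewrite ltnNge ji in l'.
- by subst i.
Qed.

End Expand.


Lemma lt_transitive : transitive lt.
Proof. by move=> y x z; apply: lt_trans. Qed.

Lemma LIg_uniq gs hs1 hs2 : isLIg gs hs1 -> isLIg gs hs2 -> hs1 = hs2.
Proof.
case=> nz1 sp1 gsp1 [pv1 [min1 inc1 one1 zero1]].
case=> nz2 sp2 gsp2 [pv2 [min2 inc2 one2 zero2]].
have s12 : forall h, h \in hs2 -> inKSpan hs1 h.
  by move=> h hi; apply: span_trans gsp1 (sp2 h hi).
have s21 : forall h, h \in hs1 -> inKSpan hs2 h.
  by move=> h hi; apply: span_trans gsp2 (sp1 h hi).
have pvE1 : forall j : 'I_(size hs1), pv1 j = piv hs1`_j.
  by move=> j; rewrite (piv_eq (min1 j)).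
have pvE2 : forall j : 'I_(size hs2), pv2 j = piv hs2`_j.
  by move=> j; rewrite (piv_eq (min2 j)).
have mem12 : forall h, h \in hs2 -> piv h \in map piv hs1.
  move=> h hi; have hnz : h != 0 by move/allP: nz2 => /(_ h hi).
  have [j hj] := span_piv one1 zero1 min1 inc1 (s12 h hi) hnz.
  by rewrite (piv_eq hj) pvE1; apply: map_f; apply: mem_nth.
have mem21 : forall h, h \in hs1 -> piv h \in map piv hs2.
  move=> h hi; have hnz : h != 0 by move/allP: nz1 => /(_ h hi).
  have [j hj] := span_piv one2 zero2 min2 inc2 (s21 h hi) hnz.
  by rewrite (piv_eq hj) pvE2; apply: map_f; apply: mem_nth.
have sort1 : sorted lt (map piv hs1).
  rewrite sorted_pairwise; last exact: lt_transitive.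
  apply/(pairwiseP 0%MM) => i j; rewrite !inE size_map => hi hj ij.
  rewrite !(nth_map 0) //.
  have := inc1 (Ordinal hi) (Ordinal hj) ij; by rewrite !pvE1.
have sort2 : sorted lt (map piv hs2).
  rewrite sorted_pairwise; last exact: lt_transitive.
  apply/(pairwiseP 0%MM) => i j; rewrite !inE size_map => hi hj ij.
  rewrite !(nth_map 0) //.
  have := inc2 (Ordinal hi) (Ordinal hj) ij; by rewrite !pvE2.
have Pe : map piv hs1 = map piv hs2.
  apply: (irr_sorted_eq lt_transitive lt_irr sort1 sort2) => x.
  apply/idP/idP => /mapP [h hi ->]; [exact: mem21 | exact: mem12].
have se : size hs1 = size hs2 by rewrite -(size_map piv) Pe size_map.
apply: (eq_from_nth (x0 := 0)) => // i hi.
have hi2 : (i < size hs2)%N by rewrite -se.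
have pe : forall j : 'I_(size hs1), pv1 j = piv hs2`_j.
  move=> j; rewrite pvE1 -(nth_map 0 0%MM) // Pe (nth_map 0) //.
  by rewrite -se.
rewrite [RHS](expand one1 zero1 (s12 _ (mem_nth 0 hi2))) (bigD1 (Ordinal hi)) //=.
rewrite big1 ?addr0.
  rewrite pe /= -(pvE2 (Ordinal hi2)) one2 scale1r //.
move=> j jne; rewrite pe.
have hj2 : (j < size hs2)%N by rewrite -se.
rewrite -(pvE2 (Ordinal hj2)) (zero2 (Ordinal hj2) (Ordinal hi2)) ?scale0r //.
Qed.


Lemma span_sum_seq gs (r : seq poly) (F : poly -> poly) :
  (forall i, i \in r -> inKSpan gs (F i)) -> inKSpan gs (\sum_(i <- r) F i).
Proof. by move=> h; rewrite big_seq; apply: span_sum. Qed.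

Definition redList (L : seq poly) : Prop :=
  [/\ all (fun h => h != 0) L, forall h, h \in L -> h@_(piv h) = 1 &
      forall h h', h \in L -> h' \in L -> h != h' -> h'@_(piv h) = 0].

Lemma red_exists gs : exists L, [/\ redList L,
  forall h, h \in L -> inKSpan gs h & forall g, g \in gs -> inKSpan L g].
Proof.
elim: gs => [|g gs [L [[nzL oneL zeroL] spL gspL]]].
  by exists [::]; split.
set g' := g - \sum_(h <- undup L) g@_(piv h) *: h.
have spg : inKSpan (g :: gs) g by apply: span_mem; rewrite mem_head.
have spgs : forall x, inKSpan gs x -> inKSpan (g :: gs) x.
  move=> x; apply: span_trans => y yi; apply: span_mem; by rewrite inE yi orbT.
have spL' : forall h, h \in L -> inKSpan (g :: gs) h by move=> h /spL; apply: spgs.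
have g'sp : inKSpan (g :: gs) g'.
  apply: spanB => //; apply: span_sum_seq => h hi; apply: spanZ; apply: spL'.
  by rewrite -mem_undup.
have g'0 : forall h0, h0 \in L -> g'@_(piv h0) = 0.
  move=> h0 h0L; rewrite /g' mcoeffB mcoeffS (bigD1_seq h0) ?mem_undup ?undup_uniq //=.
  rewrite mcoeffZ oneL // mulr1 big1_seq ?addr0 ?subrr //.
  move=> h /andP [hne hin]; rewrite mem_undup in hin.
  by rewrite mcoeffZ (zeroL h0 h) ?mulr0 // eq_sym.
have gexp : g = g' + \sum_(h <- undup L) g@_(piv h) *: h by rewrite /g' subrK.
case: (eqVneq g' 0) => [g'z|g'nz].
  exists L; split; first by split.
  - by move=> h hL; apply: spL' h hL.
  - move=> x; rewrite inE => /orP [/eqP ->|xi]; last exact: gspL.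
    rewrite gexp g'z add0r; apply: span_sum_seq => h hi; apply: spanZ.
    by apply: span_mem; rewrite -mem_undup.
set p := piv g'; set c := g'@_p.
have [cnz pmin] := (isMinE g' p).1 (pivP g'nz).
set g'' := c^-1 *: g'.
have g''E : forall m, g''@_m = c^-1 * g'@_m by move=> m; rewrite mcoeffZ.
have g''p : g''@_p = 1 by rewrite g''E mulVf.
have g''0 : forall h0, h0 \in L -> g''@_(piv h0) = 0.
  by move=> h0 h0L; rewrite g''E g'0 ?mulr0.
have pne : forall h0, h0 \in L -> piv h0 != p.
  move=> h0 h0L; apply/eqP => e; move: (g'0 h0 h0L); rewrite e => /eqP.
  by rewrite -/c (negPf cnz).
have g''min : isMinG g'' p.
  apply/isMinE; split; first by rewrite g''p oner_neq0.
  move=> m' m'nz m'ne; apply: pmin m'ne.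
  by move: m'nz; rewrite g''E mulf_eq0 negb_or => /andP [].
have pivg'' : piv g'' = p := piv_eq g''min.
have g''nz : g'' != 0.
  by apply/eqP => e; move: g''p; rewrite e mcoeff0 => /eqP; rewrite eq_sym oner_eq0.
have g''sp : inKSpan (g :: gs) g'' by apply: spanZ.
set red := fun h : poly => h - h@_p *: g''.
have redE : forall h m, (red h)@_m = h@_m - h@_p * g''@_m.
  by move=> h m; rewrite /red mcoeffB mcoeffZ.
have hnz : forall h, h \in L -> h != 0 by move=> h hL; apply: (allP nzL).
have redmin : forall h, h \in L -> isMinG (red h) (piv h).
  move=> h hL; apply/isMinE; split.
    by rewrite redE oneL // g''0 // mulr0 subr0 oner_neq0.
  move=> m' m'nz m'ne.
  have [_ hmin] := (isMinE h (piv h)).1 (pivP (hnz h hL)).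
  case: (eqVneq (h@_m') 0) => hm'; last exact: hmin.
  move: m'nz; rewrite redE hm' sub0r oppr_eq0 mulf_eq0 negb_or => /andP [hp gm'].
  have pl : lt (piv h) p by apply: hmin hp _; rewrite eq_sym pne.
  case: (eqVneq m' p) => [->//|m'p].
  by apply: lt_trans pl _; apply: ((isMinE g'' p).1 g''min).2 m' gm' m'p.
have pivred : forall h, h \in L -> piv (red h) = piv h.
  by move=> h hL; apply: piv_eq (redmin h hL).
have redp : forall h, (red h)@_p = 0 by move=> h; rewrite redE g''p mulr1 subrr.
have redone : forall h, h \in L -> (red h)@_(piv h) = 1.
  by move=> h hL; rewrite redE oneL // g''0 // mulr0 subr0.
have hLsp : forall h, h \in L -> inKSpan (g'' :: map red L) h.
  move=> h hL; have -> : h = red h + h@_p *: g'' by rewrite /red subrK.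
  apply: spanD; first by apply: span_mem; rewrite inE map_f ?orbT.
  by apply: spanZ; apply: span_mem; rewrite mem_head.
exists (g'' :: map red L); split.
- split.
  + rewrite /= g''nz /=; apply/allP => x /mapP [h hL ->].
    by apply/eqP => e; move: (redone h hL); rewrite e mcoeff0 => /eqP; rewrite eq_sym oner_eq0.
  + move=> x; rewrite inE => /orP [/eqP ->|/mapP [h hL ->]].
      by rewrite pivg''.
    by rewrite pivred // redone.
  + move=> x y; rewrite !inE => /orP [/eqP ->|/mapP [h hL ->]] /orP [/eqP ->|/mapP [k kL ->]] ne.
    * by rewrite eqxx in ne.
    * by rewrite pivg'' redp.
    * by rewrite pivred // g''0.
    * rewrite pivred // redE g''0 // mulr0 subr0 (zeroL h k) //.
      by apply: contra ne => /eqP ->.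
- move=> x; rewrite inE => /orP [/eqP ->|/mapP [h hL ->]]; first exact: g''sp.
  by apply: spanB; [apply: spL' | apply: spanZ].
- move=> y; rewrite inE => /orP [/eqP ->|yi]; last exact: span_trans hLsp (gspL y yi).
  rewrite gexp; apply: spanD.
    have -> : g' = c *: g'' by rewrite /g'' scalerA divff // scale1r.
    by apply: spanZ; apply: span_mem; rewrite mem_head.
  apply: span_sum_seq => h hi; apply: spanZ; apply: hLsp.
  by rewrite -mem_undup.
Qed.

Lemma LIg_exists gs : exists hs, isLIg gs hs.
Proof.
have [L [[nzL oneL zeroL] spL gspL]] := red_exists gs.
pose r := fun a b : poly => (piv a == piv b) || lt (piv a) (piv b).
have rtot : total r.
  move=> a b; rewrite /r; case: (eqVneq (piv a) (piv b)) => [->|ne] /=; first by [].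

  by apply: lt_total.
have rtr : transitive r.
  move=> b a c; rewrite /r => /orP [/eqP ->|ab] /orP [/eqP <-|bc];
    rewrite ?ab ?bc ?eqxx ?orbT //.
  by rewrite (lt_trans ab bc) orbT.
pose hs := sort r (undup L).
have memhs : forall x, (x \in hs) = (x \in L) by move=> x; rewrite mem_sort mem_undup.
have uhs : uniq hs by rewrite sort_uniq undup_uniq.
have pivdist : forall h k, h \in L -> k \in L -> h != k -> piv h != piv k.
  move=> h k hL kL ne; apply/eqP => e; have := zeroL h k hL kL ne.
  by rewrite e oneL // => /eqP; rewrite oner_eq0.
have memn : forall i : 'I_(size hs), hs`_i \in L.
  by move=> i; rewrite -memhs; apply: mem_nth.
exists hs; split.
- by apply/allP => x; rewrite memhs; apply: (allP nzL).
- by move=> h; rewrite memhs; apply: spL.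
- move=> g gi; apply: span_trans (gspL g gi) => h hL; apply: span_mem.
  by rewrite memhs.
- exists (fun i => piv hs`_i); split.
  + by move=> i; apply: pivP; apply: (allP nzL).
  + move=> i j ij.
    have := sorted_ltn_nth rtr 0 (sort_sorted rtot (undup L)).
    move=> /(_ i j (ltn_ord i) (ltn_ord j) ij); rewrite /r => /orP [e|//].
    have ne : hs`_i != hs`_j by rewrite nth_uniq // neq_ltn ij.
    by rewrite (negPf (pivdist _ _ (memn i) (memn j) ne)) in e.
  + by move=> i; apply: oneL.
  + move=> i j ij; apply: zeroL => //.
    by rewrite nth_uniq.
Qed.

End RREF.



Section Check.
Variables (K : fieldType) (n : nat).
Local Notation poly := {mpoly K[n]}.
Local Notation term := 'X_{1..n}.

Lemma LI_exists (Z : seq 'I_n) (gs : seq poly) : exists hs, isLI Z gs hs.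
Proof. exact: (LIg_exists (@col_irr n Z) (@col_trans n Z) (@col_total n Z)). Qed.

Lemma LI_uniq (Z : seq 'I_n) (gs hs1 hs2 : seq poly) :
  isLI Z gs hs1 -> isLI Z gs hs2 -> hs1 = hs2.
Proof. exact: (LIg_uniq (@col_irr n Z) (@col_trans n Z) (@col_total n Z)). Qed.

Lemma loop_inv delta (L : seq poly) Zc w d r : checkLoop delta L Zc w d r ->
  exists hs, isLI Zc L hs /\
   [\/ Ztilde Zc hs = [::] /\ r = None,
       [/\ Ztilde Zc hs != [::], [seq z <- Zc | z \notin Ztilde Zc hs] = [::] &
           r = Some (fun k => if k \in Ztilde Zc hs then d else w k)] |
       [/\ Ztilde Zc hs != [::], [seq z <- Zc | z \notin Ztilde Zc hs] != [::] &
        checkLoop delta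
         (map (restrictZ [seq z <- Zc | z \notin Ztilde Zc hs]) hs)
         [seq z <- Zc | z \notin Ztilde Zc hs]
         (fun k => if k \in Ztilde Zc hs then d else w k)
         (delta * d + 1)%N r]].
Proof.
case=> {L Zc w d r}.
- by move=> gs Z w d hs h1 h2; exists hs; split => //; apply: Or31.
- by move=> gs Z w d hs h1 h2 h3; exists hs; split => //; apply: Or32.
- by move=> gs Z w d hs res h1 h2 h3 h4; exists hs; split => //; apply: Or33.
Qed.

Lemma loop_uniq delta (L : seq poly) Zc w d r1 r2 :
  checkLoop delta L Zc w d r1 -> checkLoop delta L Zc w d r2 -> r1 = r2.
Proof.
move=> H; elim: H r2 => {L Zc w d r1}.
- move=> gs Z w d hs h1 h2 r2 /loop_inv [hs' [h1' H]].
  rewrite -(LI_uniq h1 h1') in H.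
  case: H => [[_ ->]//|[]|[]]; by rewrite h2.
- move=> gs Z w d hs h1 h2 h3 r2 /loop_inv [hs' [h1' H]].
  rewrite -(LI_uniq h1 h1') in H.
  case: H => [[e]|[_ _ ->]//|[_]]; [by rewrite e in h2 | by rewrite h3].
- move=> gs Z w d hs res h1 h2 h3 _ IH r2 /loop_inv [hs' [h1' H]].
  rewrite -(LI_uniq h1 h1') in H.
  case: H => [[e]|[_ e]|[_ _ H]]; [by rewrite e in h2 | by rewrite e in h3 |].
  exact: IH.
Qed.

Lemma size_filter_lt (Zc Zt : seq 'I_n) :
  Zt != [::] -> {subset Zt <= Zc} ->
  (size [seq z <- Zc | z \notin Zt] < size Zc)%N.
Proof.
case: Zt => [//|z Zt] _ sub.
rewrite size_filter -[X in (_ < X)%N](count_predC (fun x => x \notin z :: Zt) Zc).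
rewrite -addn1 leq_add2l -has_count; apply/hasP; exists z.
  by apply: sub; rewrite mem_head.
by rewrite /= negbK mem_head.
Qed.

Lemma Ztilde_sub (Zc : seq 'I_n) (hs : seq poly) : {subset Ztilde Zc hs <= Zc}.
Proof. by move=> z; rewrite mem_filter => /andP []. Qed.

Lemma loop_exists delta k : forall (L : seq poly) Zc w d, (size Zc <= k)%N ->
  exists res, checkLoop delta L Zc w d res.
Proof.
elim: k => [|k IH] L Zc w d hk.
  have [hs hLI] := LI_exists Zc L.
  exists None; apply: (loop_fail _ _ _ hLI).
  move: hk; rewrite leqn0 => /nilP ->; by [].
have [hs hLI] := LI_exists Zc L.
case: (eqVneq (Ztilde Zc hs) [::]) => e.
  by exists None; apply: loop_fail hLI e.
case: (eqVneq [seq z <- Zc | z \notin Ztilde Zc hs] [::]) => e2.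
  by eexists; apply: loop_stop hLI e e2.
have [res H] := IH (map (restrictZ [seq z <- Zc | z \notin Ztilde Zc hs]) hs)
  [seq z <- Zc | z \notin Ztilde Zc hs]
  (fun k => if k \in Ztilde Zc hs then d else w k) (delta * d + 1)%N
  (leq_trans (size_filter_lt e (@Ztilde_sub Zc hs)) hk).
by exists res; apply: loop_next hLI e e2 H.
Qed.



Lemma restrictE (Z : seq 'I_n) (p : poly) m :
  (restrictZ Z p)@_m = if has (fun z => (0 < m z)%N) Z then p@_m else 0.
Proof.
rewrite /restrictZ mcoeffS.
rewrite (eq_bigr (fun m' => p@_m' * (m' == m)%:R)); last first.
  by move=> m' _; rewrite mcoeffZ mcoeffX.
case: (boolP (m \in msupp p)) => mi.
  rewrite big_mkcond (bigD1_seq m) ?msupp_uniq //= eqxx mulr1 big1_seq ?addr0.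
    by case: ifP.
  move=> m' /andP [ne _]; case: ifP => // _; by rewrite (negPf ne) mulr0.
have -> : p@_m = 0 by apply/eqP; rewrite mcoeff_eq0.
rewrite big1_seq; first by case: ifP.
move=> m' /andP [_ m'i]; case: (eqVneq m' m) => [e|ne].
  by subst m'; rewrite m'i in mi.
by rewrite mulr0.
Qed.

Lemma wdeg_le (W : 'I_n -> nat) d (t : term) :
  (forall k, W k <= d)%N -> (wdeg W t <= d * mdeg t)%N.
Proof.
move=> h; rewrite /wdeg mdegE big_distrr /=; apply: leq_sum => i _.
by rewrite leq_mul2r h orbT.
Qed.

Lemma wdeg_eq (W W' : 'I_n -> nat) (t : term) :
  (forall k, (0 < t k)%N -> W k = W' k) -> wdeg W t = wdeg W' t.
Proof.
move=> h; rewrite /wdeg; apply: eq_bigr => i _.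
by case: (posnP (t i)) => [->|/h ->]; rewrite ?muln0.
Qed.

Lemma wdegU (W : 'I_n -> nat) z : wdeg W U_(z)%MM = W z.
Proof.
rewrite /wdeg (bigD1 z) //= mnm1E eqxx muln1 big1 ?addn0 // => i ne.
by rewrite mnm1E eq_sym (negPf ne) muln0.
Qed.

Variable gs : seq poly.
Local Notation delta := (\max_(g <- gs) tdeg g)%N.

Definition Good (Zc : seq 'I_n) (w : 'I_n -> nat) (d : nat) (f h : poly) : Prop :=
  [/\ inKSpan gs f, forall m, (delta < mdeg m)%N -> f@_m = 0,
      forall m, (delta < mdeg m)%N -> h@_m = 0 &
      forall m, (f - h)@_m != 0 ->
        (wdeg w m < d)%N && all (fun k => m k == 0)%N Zc].

Lemma Good_sum Zc w d N (c : 'I_N -> K) (F H : 'I_N -> poly) :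
  (forall i, Good Zc w d (F i) (H i)) ->
  Good Zc w d (\sum_i c i *: F i) (\sum_i c i *: H i).
Proof.
move=> hg; split.
- by apply: span_sum => i _; apply: spanZ; case: (hg i).
- move=> m hm; rewrite mcoeffS big1 // => i _; rewrite mcoeffZ.
  by case: (hg i) => _ fd _ _; rewrite fd ?mulr0.
- move=> m hm; rewrite mcoeffS big1 // => i _; rewrite mcoeffZ.
  by case: (hg i) => _ _ fd _; rewrite fd ?mulr0.
- move=> m; rewrite -sumrB mcoeffS => nz.
  have [i ni] : exists i, (c i *: F i - c i *: H i)@_m != 0.
    apply/existsP; apply: contraNT nz => /existsPn hn; rewrite big1 // => i _.
    by move: (hn i); rewrite negbK => /eqP.
  case: (hg i) => _ _ _; apply.
  by move: ni; rewrite -scalerBr mcoeffZ mulf_eq0 negb_or => /andP [].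
Qed.

Definition Inv (L : seq poly) Zc w d : Prop :=
  (forall k, w k <= d)%N /\ forall h, h \in L -> exists f, Good Zc w d f h.

Lemma Inv_LI L Zc w d hs : Inv L Zc w d -> isLI Zc L hs ->
  forall h, h \in hs -> exists f, Good Zc w d f h.
Proof.
move=> [_ hL] [_ sp _ _] h hh; have [c ->] := sp h hh.
have [F HF] : exists F : 'I_(size L) -> poly, forall i, Good Zc w d (F i) L`_i.
  exact: (fin_all_exists (fun i : 'I_(size L) => hL _ (mem_nth 0 (ltn_ord i)))).
by exists (\sum_i c i *: F i); apply: Good_sum.
Qed.

Lemma Good_restrict Zc w d f h (Zt : seq 'I_n) :
  (1 <= delta)%N -> {subset Zt <= Zc} -> (forall k, w k <= d)%N ->
  Good Zc w d f h ->
  Good [seq z <- Zc | z \notin Zt] (fun k => if k \in Zt then d else w k)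
       (delta * d + 1)%N f (restrictZ [seq z <- Zc | z \notin Zt] h).
Proof.
move=> dpos sub wle [sp fdeg hdeg D].
have w'le : forall k, ((if k \in Zt then d else w k) <= d)%N.
  by move=> k; case: ifP.
have dle : (d <= delta * d + 1)%N.
  by rewrite addn1; apply: leq_trans (leq_pmull d dpos) (leqnSn _).
split => //.
  by move=> m hm; rewrite restrictE hdeg //; case: ifP.
move=> m; rewrite mcoeffB restrictE.
case: ifP => hasm.
  rewrite -mcoeffB => /D /andP [lt al].
  have allm : forall k, k \in Zc -> m k = 0%N by move=> k kin; apply/eqP; apply: (allP al).
  apply/andP; split.
    rewrite (@wdeg_eq _ w); first exact: leq_trans lt dle.
    move=> k mk; case: ifP => // kt.
    by rewrite allm ?ltnn // in mk; apply: sub.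
  by apply/allP => k; rewrite mem_filter => /andP [_ kin]; rewrite allm.
rewrite subr0 => fm.
have mdeg_le : (mdeg m <= delta)%N.
  by rewrite leqNgt; apply: contra fm => /fdeg ->.
apply/andP; split.
  apply: leq_ltn_trans (wdeg_le m w'le) _.
  by rewrite addn1 ltnS mulnC leq_mul2r mdeg_le orbT.
apply/allP => k kin; move/hasPn: hasm => /(_ k kin).
by rewrite lt0n negbK.
Qed.

Definition Final (W : 'I_n -> nat) (z : 'I_n) : Prop :=
  exists f, [/\ inKSpan gs f, U_(z)%MM \in msupp f &
    forall m, m \in msupp f -> m != U_(z)%MM -> (wdeg W m < wdeg W U_(z)%MM)%N].

Lemma Good_final Zc w d f z W : Good Zc w d f 'X_z -> z \in Zc ->
  (forall k, k \notin Zc -> W k = w k) -> W z = d -> Final W z.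
Proof.
move=> [sp _ _ D] zin Wk Wz; exists f; split => //.
  have e : (f - 'X_z)@_U_(z) = 0.
    apply/eqP; apply: contraT => /D /andP [_ /allP /(_ z zin)].
    by rewrite mnm1E eqxx.
  rewrite mcoeff_msupp; move: e; rewrite mcoeffB mcoeffX eqxx => /eqP.
  by rewrite subr_eq0 => /eqP ->; rewrite oner_neq0.
move=> m; rewrite mcoeff_msupp => fm ne.
have : (f - 'X_z)@_m != 0.
  have ne' : (U_(z)%MM == m) = false by apply/negbTE; rewrite eq_sym.
  by rewrite mcoeffB mcoeffX ne' subr0.
move=> /D /andP [lt al]; rewrite wdegU Wz.
rewrite (@wdeg_eq _ w) // => k mk; apply: Wk; apply: contraL mk => kin.
by rewrite lt0n negbK; apply: (allP al).
Qed.

Lemma Xz_in_hs (Zc : seq 'I_n) (hs : seq poly) z :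
  z \in Ztilde Zc hs -> 'X_z \in hs.
Proof. by rewrite mem_filter => /andP []. Qed.

Lemma delta_pos Zc w d f z : Good Zc w d f 'X_z -> (1 <= delta)%N.
Proof.
case=> _ _ hd _; rewrite leqNgt; apply/negP => /(@leq_trans _ _ _)/(_ (leqnn _)) h.
have := hd U_(z)%MM; rewrite mdeg1 => /(_ h); rewrite mcoeffX eqxx => /eqP.
by rewrite oner_eq0.
Qed.

Lemma loop_correct L Zc w d res : checkLoop delta L Zc w d res ->
  forall W, res = Some W -> Inv L Zc w d ->
  (forall k, k \notin Zc -> W k = w k) /\ (forall z, z \in Zc -> Final W z).
Proof.
elim=> {L Zc w d res}.
- by [].
- move=> L Zc w d hs hLI ne e2 W [<-] inv.
  have hG := Inv_LI inv hLI.
  split.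
    move=> k kn; case: ifP => // kt.
    by rewrite (Ztilde_sub kt) in kn.
  move=> z zin.
  have zt : z \in Ztilde Zc hs.
    apply: contraT => zn; have : z \in [seq z <- Zc | z \notin Ztilde Zc hs].
      by rewrite mem_filter zn.
    by rewrite e2.
  have [f Gf] := hG 'X_z (Xz_in_hs zt).
  apply: Good_final Gf zin _ _; last by rewrite zt.
  move=> k kn; case: ifP => // kt.
  by rewrite (Ztilde_sub kt) in kn.
- move=> L Zc w d hs res hLI ne e2 _ IH W eW inv.
  have hG := Inv_LI inv hLI.
  have [z0 z0t] : exists z, z \in Ztilde Zc hs.
    by case: (Ztilde Zc hs) ne => [//|z0 s0] _; exists z0; rewrite mem_head.
  have [f0 Gf0] := hG 'X_z0 (Xz_in_hs z0t).
  have dpos := delta_pos Gf0.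
  have inv' : Inv (map (restrictZ [seq z <- Zc | z \notin Ztilde Zc hs]) hs)
      [seq z <- Zc | z \notin Ztilde Zc hs]
      (fun k => if k \in Ztilde Zc hs then d else w k) (delta * d + 1)%N.
    split.
      move=> k; case: ifP => _; last case: inv => /(_ k) wk _.
        by rewrite addn1; apply: leq_trans (leq_pmull d dpos) (leqnSn _).
      by rewrite addn1; apply: leq_trans wk _; apply: leq_trans (leq_pmull d dpos) (leqnSn _).
    move=> h' /mapP [h hh ->]; have [f Gf] := hG h hh.
    exists f; apply: Good_restrict => //; first exact: Ztilde_sub.
    by case: inv.
  have [IH1 IH2] := IH W eW inv'.
  have Wk : forall k, k \notin Zc -> W k = w k.
    move=> k kn; rewrite IH1; last by rewrite mem_filter negb_and kn orbT.
    by case: ifP => // kt; rewrite (Ztilde_sub kt) in kn.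
  split => // z zin.
  case: (boolP (z \in Ztilde Zc hs)) => zt; last by apply: IH2; rewrite mem_filter zt.
  have [f Gf] := hG 'X_z (Xz_in_hs zt).
  apply: Good_final Gf zin Wk _.
  by rewrite IH1 ?zt // mem_filter zt.
Qed.


End Check.


Section Init.
Variables (K : fieldType) (n : nat) (gs : seq {mpoly K[n]}).

Lemma Inv_init (Z : seq 'I_n) :
  Inv gs (map (restrictZ Z) gs) Z (fun _ => 0%N) 1.
Proof.
split => // h /mapP [g gi ->]; exists g; split.
- exact: span_mem.
- move=> m hm; apply/eqP; rewrite mcoeff_eq0; apply: contraTN hm => mi.
  rewrite -leqNgt; apply: (@leq_trans (tdeg g)).
    exact: (leq_bigmax_seq (F := fun m : 'X_{1..n} => mdeg m) m mi).
  exact: (leq_bigmax_seq (F := fun g => tdeg g) g gi).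
- move=> m hm; rewrite restrictE; case: ifP => // _.
  apply/eqP; rewrite mcoeff_eq0; apply: contraTN hm => mi.
  rewrite -leqNgt; apply: (@leq_trans (tdeg g)).
    exact: (leq_bigmax_seq (F := fun m : 'X_{1..n} => mdeg m) m mi).
  exact: (leq_bigmax_seq (F := fun g => tdeg g) g gi).
- move=> m; rewrite mcoeffB restrictE; case: ifP => hasm.
    by rewrite subrr eqxx.
  move=> _; apply/andP; split.
    by rewrite /wdeg big1 // => i _; rewrite mul0n.
  by apply/allP => k kin; move/hasPn: hasm => /(_ k kin); rewrite lt0n negbK.
Qed.

Lemma CHECK_inv (Z : seq 'I_n) res : CHECK gs Z res ->
  res = None \/ checkLoop (\max_(g <- gs) tdeg g)%N (map (restrictZ Z) gs) Z
      (fun _ => 0%N) 1%N res.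
Proof. by case=> [_|r _ H]; [left | right]. Qed.

End Init.

Theorem mainTheorem2 (K : fieldType) (n : nat) (gs : seq {mpoly K[n]})
    (s : nat) (Z : s.-tuple 'I_n) (uniqZ : uniq Z) :
  (* CHECK terminates, with a uniquely determined result (Fail or a tuple W) *)
  (exists res, CHECK gs Z res) /\
  (forall res1 res2, CHECK gs Z res1 -> CHECK gs Z res2 -> res1 = res2) /\
  (* correctness of a returned tuple W *)
  (forall W : 'I_n -> nat, CHECK gs Z (Some W) ->
     exists f : 'I_s -> {mpoly K[n]},
       (forall i, inKSpan gs (f i)) /\
       (forall le : rel 'X_{1..n}, termOrdering le -> compatible W le ->
          forall i, LTis le (f i) U_(tnth Z i)%MM) /\
       ZSeparating gs Z f).
Proof.
split.
  case: (leqP (size Z) (\rank (linMx (map (restrictZ Z) gs)))) => hr.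
    have [res H] := loop_exists (\max_(g <- gs) tdeg g)%N
       (map (restrictZ Z) gs) (fun _ => 0%N) 1%N (leqnn (size Z)).
    by exists res; apply: check_loop.
  by exists None; apply: check_rank_fail.
split.
  move=> r1 r2 [h1|r1' h1 H1] [h2|r2' h2 H2] //.
  - by rewrite ltnNge h2 in h1.
  - by rewrite ltnNge h1 in h2.
  - exact: loop_uniq H1 H2.
move=> W HW.
have H : checkLoop (\max_(g <- gs) tdeg g)%N (map (restrictZ Z) gs) Z
      (fun _ => 0%N) 1%N (Some W) by case: (CHECK_inv HW).
have [_ Fin] := loop_correct H (erefl _) (Inv_init gs Z).
have [f Hf] := fin_all_exists (fun i : 'I_s => Fin (tnth Z i) (mem_tnth i Z)).
have LT : forall le, termOrdering le -> compatible W le ->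
    forall i, LTis le (f i) U_(tnth Z i)%MM.
  move=> le [[refl _ _ _] _] comp i; case: (Hf i) => _ Ui Hm; split => // m mi.
  case: (eqVneq m U_(tnth Z i)%MM) => [->|ne]; first exact: refl.
  by case/andP: (comp _ _ (Hm m mi ne)).
exists f; split; [|split] => //.
  by move=> i; case: (Hf i).
split.
  move=> i; case: (Hf i) => [[c ->] _ _]; exists (fun j => (c j)%:MP).
  by apply: eq_bigr => j _; rewrite mul_mpolyC.
exists (leW W); split; first exact: leW_order.
by apply: LT; [exact: leW_order | exact: leW_compat].
Qed.
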